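(* For every $C>1$ there is $n_C\in\mathbb N$ such that the following holds. If $G=(V_1,V_2,E)$ is a $C$-bipartite-Ramsey graph with $|V_1|,|V_2|\ge n_C$, then the edge density $e(G)/(|V_1||V_2|)$ lies between $(16C)^{-1}$ and $1-(16C)^{-1}$.
   Context: A bipartite graph $G=(V_1,V_2,E)$ has vertex set $V_1\sqcup V_2$ and edge set $E\subset V_1\times V_2$; $e(G)=|E|$. Given $C>0$, $G$ is called $C$-bipartite-Ramsey if for all integers $t_1\ge C\log_2|V_1|$ and $t_2\ge C\log_2|V_2|$ there are no $T_1\subset V_1$, $T_2\subset V_2$ with $|T_1|=t_1$, $|T_2|=t_2$ such that all pairs in $T_1\times T_2$ are edges, or all are non-edges (no induced $K_{t_1,t_2}$ or $\overline{K_{t_1,t_2}}$). *)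

(* Defs.v *)
From mathcomp Require Import all_boot.
From Stdlib Require Import Reals.
Set Implicit Arguments. Unset Strict Implicit. Unset Printing Implicit Defensive.

Definition log2 (x : R) : R := (ln x / ln 2)%R.

Definition homogeneous_pair (V1 V2 : finType) (E : {set V1 * V2})
  (T1 : {set V1}) (T2 : {set V2}) : Prop :=
  (forall x y, x \in T1 -> y \in T2 -> (x, y) \in E) \/
  (forall x y, x \in T1 -> y \in T2 -> (x, y) \notin E).

Definition bip_ramsey (C : R) (V1 V2 : finType) (E : {set V1 * V2}) : Prop :=
  forall t1 t2 : nat,
    (C * log2 (INR #|V1|) <= INR t1)%R ->
    (C * log2 (INR #|V2|) <= INR t2)%R ->
    ~ exists (T1 : {set V1}) (T2 : {set V2}),
        #|T1| = t1 /\ #|T2| = t2 /\ homogeneous_pair E T1 T2.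

Definition edge_density (V1 V2 : finType) (E : {set V1 * V2}) : R :=
  (INR #|E| / (INR #|V1| * INR #|V2|))%R.

(* Main.v *)
Require Import Defs.
From mathcomp Require Import all_boot.
From Stdlib Require Import Reals.
From mathcomp Require Import zify.
From Stdlib Require Import Lra Lia ZArith.
Set Implicit Arguments. Unset Strict Implicit. Unset Printing Implicit Defensive.


Lemma ffact_le_exp n t : n ^_ t <= expn n t.
Proof.
  elim: t n => [|t IH] n; first by rewrite ffactn0 expn0.
  rewrite ffactnS expnS leq_mul2l; apply/orP; right.
  apply: leq_trans (IH _) _. case: t {IH} => [|t]; first by rewrite !expn0.
  rewrite leq_exp2r //. exact: leq_pred.
Qed.

Lemma exp_le_ffact m t : expn (m - t) t <= m ^_ t.
Proof.
  elim: t m => [|t IH] m; first by rewrite ffactn0 expn0.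
  rewrite ffactnS expnS. apply: leq_mul; first by apply: leq_subr.
  apply: leq_trans (IH m.-1). rewrite -subn1 -subnDA add1n. by [].
Qed.

Lemma bin_ratio m n t : 'C(n, t) * expn (m - t) t <= 'C(m, t) * expn n t.
Proof.
  rewrite -(leq_pmul2r (fact_gt0 t)) mulnAC bin_ffact [X in _ <= X]mulnAC bin_ffact.
  rewrite mulnC. apply: leq_mul; [exact: exp_le_ffact | exact: ffact_le_exp].
Qed.

Lemma sum_bool_card (T : finType) (P : pred T) :
  \sum_(x : T) (P x : nat) = #|[set x | P x]|.
Proof.
  rewrite -sum1dep_card [in RHS]big_mkcond /=. apply: eq_bigr => x _. by case: (P x).
Qed.


Lemma comb (A B : finType) (r : A -> B -> bool) (t1 t2 D : nat) :
  2 * (\sum_(b : B) #|[set a | r a b]|) < (D + 1) * #|B| ->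
  2 * t2 * 'C(#|A|, t1) < #|B| * 'C(#|A| - D, t1) ->
  exists TA : {set A}, exists TB : {set B},
    #|TA| = t1 /\ #|TB| = t2 /\ forall a b, a \in TA -> b \in TB -> ~~ r a b.
Proof.
  move=> He Hb.
  set N := fun b => [set a | ~~ r a b].
  have cardN : forall b, #|N b| + #|[set a | r a b]| = #|A|.
  { move=> b. rewrite -(cardsC [set a | r a b]) addnC. congr (_ + _).
    apply: eq_card => a. by rewrite !inE. }
  set S := [set b | #|[set a | r a b]| <= D].
  have HS : #|B| < 2 * #|S|.
  { have H1 : #|~: S| * (D + 1) <= \sum_(b : B) #|[set a | r a b]|.
    { rewrite (bigID (fun b => b \in ~: S)) /=. apply: leq_trans (leq_addr _ _).
      rewrite -sum_nat_const. apply: leq_sum => b. rewrite !inE -ltnNge addn1. by []. }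
    have H2 := cardsC S.
    have H3 : (D + 1) * (2 * #|~: S|) < (D + 1) * (#|S| + #|~: S|).
    { rewrite H2. apply: leq_ltn_trans He. rewrite mulnCA leq_mul2l. by rewrite mulnC H1 orbT. }
    rewrite ltn_mul2l in H3. move/andP: H3 => [_ H3]. lia. }
  case: (boolP [exists T : {set A}, (#|T| == t1) && (t2 <= #|[set b | T \subset N b]|)]).
  - move/existsP=> [T /andP [/eqP HT Ht2]].
    set Y := [set b | T \subset N b].
    have : 0 < #|[set X : {set B} | X \subset Y & #|X| == t2]| by rewrite cards_draws bin_gt0.
    move/card_gt0P=> [X]. rewrite inE => /andP [HXY /eqP HX].
    exists T, X. split => //. split => //. move=> a b Ha Hbx.
    have := subsetP HXY b Hbx. rewrite inE => /subsetP /(_ a Ha). by rewrite inE.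
  - rewrite negb_exists => /forallP Hall.
    pose F := fun (T : {set A}) b => ((#|T| == t1) && (T \subset N b) : nat).
    have Up : \sum_T \sum_b F T b <= 'C(#|A|, t1) * t2.-1.
    { rewrite -card_draws -sum_bool_card big_distrl /=.
      apply: leq_sum => T _. have := Hall T. rewrite negb_and.
      rewrite /F. case: (#|T| == t1) => /=; last first.
      { move=> _. rewrite mul0n. by rewrite big1. }
      rewrite -ltnNge mul1n => H. rewrite sum_bool_card. by rewrite -ltnS (ltn_predK H). }
    have Lo : #|S| * 'C(#|A| - D, t1) <= \sum_T \sum_b F T b.
    { rewrite exchange_big /=.
      have E : forall b, \sum_T F T b = 'C(#|N b|, t1).
      { move=> b. rewrite /F sum_bool_card -cards_draws. apply: eq_card => T. by rewrite !inE andbC. }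
      under eq_bigr do rewrite E.
      rewrite -sum_nat_const [X in _ <= X](bigID (fun b => b \in S)) /=. apply: leq_trans (leq_addr _ _).
      apply: leq_sum => b. rewrite /S inE => Hb'. apply: leq_bin2l. have := cardN b. move: Hb'. set d := #|[set a | r a b]|. set d2 := #|N b|. set nA := #|A|. lia. }
    have X := leq_trans Lo Up.
    exfalso. move: Hb HS X. set c := 'C(#|A|, t1). set x := 'C(#|A| - D, t1).
    set s := #|S|. set n2 := #|B|. move=> Hb HS X.
    have H1 : n2 * x <= 2 * s * x by rewrite leq_mul2r ltnW ?orbT.
    have H2 : 2 * (s * x) <= 2 * (c * t2.-1) by rewrite leq_mul2l X orbT.
    have H3 : c * t2.-1 <= c * t2 by rewrite leq_mul2l leq_pred orbT.
    lia.
Qed.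

Unset Implicit Arguments.
Open Scope R_scope.

Lemma ln_le_sub1 y : 0 < y -> ln y <= y - 1.
Proof. intro Hy. have := exp_ineq1_le (ln y). rewrite exp_ln //. lra. Qed.

Lemma ln_sub_le a b : 0 < a -> 0 < b -> ln a - ln b <= a / b - 1.
Proof.
  intros Ha Hb. replace a with (b * (a / b)) at 1 by (field; lra).
  rewrite ln_mult; [| lra | apply Rdiv_lt_0_compat; lra].
  have := ln_le_sub1 (a/b) (Rdiv_lt_0_compat _ _ Ha Hb). lra.
Qed.

Lemma ln_tan4 z : 0 < z -> ln z <= z / 4 + ln 4 - 1.
Proof.
  intros Hz. replace z with (4 * (z / 4)) at 1 by field.
  rewrite ln_mult; [| lra | lra].
  have := ln_le_sub1 (z/4) ltac:(lra). lra.
Qed.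

Definition KC (C : R) := 3 * (ln (4 * C + 2) + ln 4) + 3.

Lemma core_real (C n1 n2 D t2 : R) (k : nat) :
  1 < C -> 2 <= n1 -> n1 <= n2 ->
  INR k <= C * (ln n1 / ln 2) + 1 ->
  0 < t2 -> t2 <= C * (ln n2 / ln 2) + 1 ->
  0 <= D -> D * (8 * C) <= n1 ->
  INR k * (24 * C) <= n1 ->
  KC C <= ln n2 ->
  2 * t2 * n1 ^ k < n2 * (n1 - D - INR k) ^ k.
Proof.
  intros HC Hn1 Hn12 Hk Ht2 Ht2' HD HD' Hk' HK.
  set t1 := INR k in Hk Hk' *.
  have Ht1 : 0 <= t1 by apply pos_INR.
  set m := n1 - D - t1.
  have HDt : (D + t1) * (6 * C) <= n1 by nra.
  have Hm : 5 / 6 * n1 <= m by unfold m; nra.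
  have Hmpos : 0 < m by lra.
  have l2 := ln_lt_2.
  have L1pos : 0 < ln n1 by rewrite -ln_1; apply ln_increasing; lra.
  have L12 : ln n1 <= ln n2.
  { destruct (Rle_lt_or_eq_dec _ _ Hn12) as [h|h]; [left; apply ln_increasing; lra | rewrite h; lra]. }
  have Ha : ln n1 / ln 2 <= 2 * ln n1.
  { apply Rmult_le_reg_r with (ln 2); [lra|]. unfold Rdiv. rewrite Rmult_assoc Rinv_l; nra. }
  have Hb : ln n2 / ln 2 <= 2 * ln n2.
  { apply Rmult_le_reg_r with (ln 2); [lra|]. unfold Rdiv. rewrite Rmult_assoc Rinv_l; nra. }
  set u := ln n1 - ln m.
  have Hu : u <= n1 / m - 1 by apply ln_sub_le; lra.
  set w := n1 / m - 1 in Hu.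
  have Hwm : w * m = D + t1.
  { rewrite /w. have -> : D + t1 = n1 - m by rewrite /m; ring. field. lra. }
  have Hw : w * (5 * C) <= 1.
  { apply Rmult_le_reg_r with m; [lra|]. nra. }
  have Hw0 : 0 <= w by nra.
  have Ht1w : t1 * u <= 2 / 5 * (ln n1) + 1 / 5.
  { have : t1 * u <= t1 * w by nra.
    have : t1 * w * (5 * C) <= t1 by nra.
    have : t1 <= 2 * C * (ln n1) + 1 by nra.
    intros. apply Rmult_le_reg_r with (5 * C); [lra|]. nra. }
  set P := ln (4 * C + 2) + ln 4.
  have HP : 0 <= P.
  { unfold P. have : 0 < ln (4*C+2) by rewrite -ln_1; apply ln_increasing; lra.
    have : 0 < ln 4 by rewrite -ln_1; apply ln_increasing; lra. lra. }
  have HK' : 3 * P + 3 <= (ln n2) by exact HK.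
  have Ht2b : 2 * t2 <= (4 * C + 2) * (ln n2) by nra.
  have Hlt2 : ln (2 * t2) <= P + ln n2 / 4 - 1.
  { have H1 : ln (2 * t2) <= ln ((4 * C + 2) * ln n2).
    { destruct (Rle_lt_or_eq_dec _ _ Ht2b) as [h|h]; [left; apply ln_increasing; lra | rewrite h; lra]. }
    have H2 : ln ((4 * C + 2) * ln n2) = ln (4 * C + 2) + ln (ln n2) by apply ln_mult; lra.
    have := ln_tan4 (ln n2) ltac:(lra). unfold P. lra. }
  apply ln_lt_inv.
  - apply Rmult_lt_0_compat; [lra | apply pow_lt; lra].
  - apply Rmult_lt_0_compat; [lra | apply pow_lt; lra].
  - rewrite (ln_mult (2 * t2)); [| lra | apply pow_lt; lra].
    rewrite (ln_mult n2); [| lra | apply pow_lt; lra].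
    rewrite !ln_pow; [| lra | lra]. change (INR k) with t1.
    have : t1 * (ln n1) - t1 * ln m = t1 * u by unfold u; ring.
    lra.
Qed.

Set Implicit Arguments.

Definition tC (C : R) (n : nat) : nat := Z.to_nat (up (C * log2 (INR n))).

Open Scope R_scope.

Lemma INR_ge2 (n : nat) : (2 <= n)%nat -> 2 <= INR n.
Proof. move=> h. change 2 with (INR 2). apply le_INR. by apply/leP. Qed.

Lemma log2_pos (n : nat) : (2 <= n)%nat -> 0 < log2 (INR n).
Proof.
  move=> h. have := INR_ge2 h => h2. unfold log2. apply Rdiv_lt_0_compat;
  rewrite -ln_1; apply ln_increasing; lra.
Qed.

Lemma tC_prop C (n : nat) : 1 < C -> (2 <= n)%nat ->
  C * log2 (INR n) <= INR (tC C n) <= C * log2 (INR n) + 1 /\ 0 < INR (tC C n).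
Proof.
  move=> HC hn. have hl := log2_pos hn.
  destruct (archimed (C * log2 (INR n))) as [h1 h2].
  have hz : (0 <= up (C * log2 (INR n)))%Z by apply le_IZR; nra.
  rewrite /tC (INR_IZR_INZ (Z.to_nat _)) Z2Nat.id //. nra.
Qed.

Lemma up_le x (n : nat) : (Z.to_nat (up x) <= n)%nat -> x < INR n.
Proof.
  move=> h. destruct (archimed x) as [h1 h2].
  destruct (Z_le_gt_dec 0 (up x)) as [hz|hz].
  - apply Rlt_le_trans with (IZR (up x)); first lra.
    rewrite -(Z2Nat.id _ hz) -INR_IZR_INZ. apply le_INR. by apply/leP.
  - have : IZR (up x) < 0 by apply IZR_lt; lia.
    have := pos_INR n. lra.
Qed.

Lemma ln_tan k z : 0 < k -> 0 < z -> ln z <= z / k + ln k - 1.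
Proof.
  intros Hk Hz. replace z with (k * (z / k)) at 1 by (field; lra).
  rewrite ln_mult; [| lra | apply Rdiv_lt_0_compat; lra].
  have := ln_le_sub1 (z/k) ltac:(apply Rdiv_lt_0_compat; lra). lra.
Qed.

Definition MC (C : R) := 48 * C * (2 * C * ln (96 * C * C) + 1).

Definition NC (C : R) : nat :=
  maxn 2 (maxn (Z.to_nat (up (exp (KC C)))) (Z.to_nat (up (MC C)))).

Lemma NC_prop C (n : nat) : (NC C <= n)%nat ->
  (2 <= n)%nat /\ KC C <= ln (INR n) /\ MC C <= INR n.
Proof.
  rewrite /NC !geq_max => /andP [h2 /andP [hK hM]].
  split => //. split.
  - have := up_le hK => h. have hn := INR_ge2 h2.
    rewrite -(ln_exp (KC C)). left. apply ln_increasing => //. apply exp_pos.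
  - have := up_le hM. lra.
Qed.

Lemma t_small C (n : nat) (t : R) : 1 < C -> (NC C <= n)%nat ->
  t <= C * log2 (INR n) + 1 -> t * (24 * C) <= INR n.
Proof.
  move=> HC hN ht. have [h2 [_ hM]] := NC_prop hN.
  have hn := INR_ge2 h2. have hl := log2_pos h2.
  have l2 := ln_lt_2.
  have Lpos : 0 < ln (INR n) by rewrite -ln_1; apply ln_increasing; lra.
  have Ha : log2 (INR n) <= 2 * ln (INR n).
  { apply Rmult_le_reg_r with (ln 2); [lra|]. unfold log2, Rdiv. rewrite Rmult_assoc Rinv_l; nra. }
  set k := 96 * C * C.
  have hk : 0 < k by rewrite /k; nra.
  have hlk := @ln_tan k (INR n) hk ltac:(lra).
  have E : 2 * C * (INR n / k) * (24 * C) = INR n / 2 by rewrite /k; field; lra.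
  have hM' : (2 * C * ln k + 1) * (48 * C) <= INR n by rewrite /MC in hM; rewrite /k; nra.
  have : t <= 2 * C * (INR n / k + ln k - 1) + 1 by nra.
  move=> h. have hlk0 : 0 < ln k.
  { rewrite -ln_1. apply ln_increasing; [lra|]. rewrite /k. nra. }
  nra.
Qed.

Close Scope R_scope.

Lemma INR_muln (m n : nat) : INR (m * n) = (INR m * INR n)%R.
Proof. by rewrite -multE mult_INR. Qed.
Lemma INR_addn (m n : nat) : INR (m + n) = (INR m + INR n)%R.
Proof. by rewrite -plusE plus_INR. Qed.
Lemma INR_subn (m n : nat) : n <= m -> INR (m - n) = (INR m - INR n)%R.
Proof. move=> h. rewrite -minusE minus_INR //. by apply/leP. Qed.
Lemma INR_expn (m n : nat) : INR (expn m n) = (INR m ^ n)%R.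
Proof. elim: n => [|n IH]; first by rewrite expn0. by rewrite expnS INR_muln IH. Qed.

Lemma core C (A B : finType) (r : A -> B -> bool) : (1 < C)%R ->
  NC C <= #|A| -> #|A| <= #|B| ->
  (16 * C * INR (\sum_(b : B) #|[set a | r a b]|) <= INR #|A| * INR #|B|)%R ->
  exists TA : {set A}, exists TB : {set B},
    #|TA| = tC C #|A| /\ #|TB| = tC C #|B| /\ forall a b, a \in TA -> b \in TB -> ~~ r a b.
Proof.
  move=> HC hN1 h12 He.
  move: He. set n1 := #|A|. set n2 := #|B|. set e := \sum_(b : B) _. move=> He.
  have hN2 : NC C <= n2 by apply: leq_trans h12.
  have [h21 [hK1 hM1]] := NC_prop hN1.
  have [h22 [hK2 hM2]] := NC_prop hN2.
  have [ht1 ht1p] := tC_prop (n := n1) HC h21.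
  have [ht2 ht2p] := tC_prop (n := n2) HC h22.
  set t1 := tC C n1 in ht1 ht1p *. set t2 := tC C n2 in ht2 ht2p *.
  set D := (2 * e) %/ n2.
  have n2pos : 0 < n2 by lia.
  apply: (comb (D := D)).
  - rewrite /D. have := leq_divM (2 * e) n2. have := ltn_pmod (2 * e) n2pos.
    have := divn_eq (2 * e) n2. lia.
  - have hn1 : (2 <= INR n1)%R := INR_ge2 h21. have hn2 := INR_ge2 h22.
    have h12R : (INR n1 <= INR n2)%R by apply le_INR; apply/leP.
    have hDe : (INR D * INR n2 <= 2 * INR e)%R.
    { rewrite -INR_muln. have -> : (2 * INR e)%R = INR (2 * e) by rewrite INR_muln.
      apply le_INR; apply/leP. exact: leq_divM. }
    have hD0 : (0 <= INR D)%R by apply pos_INR.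
    have hD8 : (INR D * (8 * C) <= INR n1)%R.
    { apply Rmult_le_reg_r with (INR n2); [lra|]. nra. }
    have ht1s : (INR t1 * (24 * C) <= INR n1)%R.
    { apply: (t_small (n := n1)) => //. lra. }
    have Hr := @core_real C (INR n1) (INR n2) (INR D) (INR t2) t1 HC ltac:(lra) h12R ltac:(unfold log2 in ht1; lra) ht2p
                  ltac:(unfold log2 in ht2; lra) hD0 hD8 ht1s hK2.
    have hDt : D + t1 <= n1.
    { apply/leP. apply INR_le. rewrite -plusE plus_INR. have := pos_INR t1. nra. }
    have Hnat : 2 * t2 * expn n1 t1 < n2 * expn (n1 - D - t1) t1.
    { apply/ltP. apply INR_lt. rewrite !INR_muln !INR_expn !INR_subn; [|lia|lia].
      have -> : INR 2 = 2%R by []. exact Hr. }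
    have Hb := bin_ratio (n1 - D) n1 t1.
    have Hc : 0 < 'C(n1, t1) by rewrite bin_gt0; lia.
    have Hp : 0 < expn n1 t1 by rewrite expn_gt0; lia.
    rewrite -(ltn_pmul2r Hp).
    have S1 : 'C(n1, t1) * (2 * t2 * expn n1 t1) < 'C(n1, t1) * (n2 * expn (n1 - D - t1) t1)
      by rewrite ltn_pmul2l.
    have S2 : n2 * ('C(n1, t1) * expn (n1 - D - t1) t1) <= n2 * ('C(n1 - D, t1) * expn n1 t1)
      by rewrite leq_mul2l Hb orbT.
    move: S1 S2. set c := 'C(n1, t1). set c' := 'C(n1 - D, t1). set X := expn n1 t1.
    set Y := expn (n1 - D - t1) t1. move=> S1 S2. have e1 : 2 * t2 * c * X = c * (2 * t2 * X) by rewrite [RHS]mulnA [c * _]mulnC. rewrite e1. apply: (leq_trans S1). rewrite mulnCA -mulnA. exact: S2.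
Qed.


Lemma count_pairs (V1 V2 : finType) (q : V1 -> V2 -> bool) :
  \sum_(b : V2) #|[set a | q a b]| = #|[set p : V1 * V2 | q p.1 p.2]| /\
  \sum_(a : V1) #|[set b | q a b]| = #|[set p : V1 * V2 | q p.1 p.2]|.
Proof.
  have H : #|[set p : V1 * V2 | q p.1 p.2]| = \sum_(a : V1) \sum_(b : V2) (q a b : nat).
  { by rewrite -sum_bool_card pair_bigA. }
  rewrite H. split.
  - rewrite exchange_big /=. apply: eq_bigr => b _. by rewrite sum_bool_card.
  - apply: eq_bigr => a _. by rewrite sum_bool_card.
Qed.

Lemma side C (V1 V2 : finType) (q : V1 -> V2 -> bool) : (1 < C)%R ->
  NC C <= #|V1| -> NC C <= #|V2| ->
  (16 * C * INR #|[set p : V1 * V2 | q p.1 p.2]| <= INR #|V1| * INR #|V2|)%R ->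
  exists T1 : {set V1}, exists T2 : {set V2},
    #|T1| = tC C #|V1| /\ #|T2| = tC C #|V2| /\ forall x y, x \in T1 -> y \in T2 -> ~~ q x y.
Proof.
  move=> HC h1 h2 He. have [c1 c2] := count_pairs q.
  case: (leqP #|V1| #|V2|) => h12.
  - apply: core => //. by rewrite c1.
  - have := @core C V2 V1 (fun b a => q a b) HC h2 (ltnW h12).
    rewrite c2 Rmult_comm. move=> /(_ ltac:(lra)) [TA [TB [hA [hB hAB]]]].
    exists TB, TA. split => //. split => //. move=> x y hx hy. exact: hAB.
Qed.


Theorem lemma2p1 :
  forall C : R, (1 < C)%R ->
  exists nC : nat,
    forall (V1 V2 : finType) (E : {set V1 * V2}),
      bip_ramsey C E ->
      nC <= #|V1| -> nC <= #|V2| ->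
      (/ (16 * C) <= edge_density E <= 1 - / (16 * C))%R.
Proof.
  move=> C HC. exists (NC C) => V1 V2 E HR h1 h2.
  have [h21 _] := NC_prop h1. have [h22 _] := NC_prop h2.
  have hn1 := INR_ge2 h21. have hn2 := INR_ge2 h22.
  have [[ht1 _] _] := tC_prop (n := #|V1|) HC h21.
  have [[ht2 _] _] := tC_prop (n := #|V2|) HC h22.
  set n1 := INR #|V1| in hn1 ht1 *. set n2 := INR #|V2| in hn2 ht2 *.
  have hP : (0 < n1 * n2)%R by nra.
  have key : forall d : R, (0 <= d)%R -> (d / (n1 * n2) < / (16 * C))%R -> (16 * C * d <= n1 * n2)%R.
  { move=> d hd h. have E1 : (d = (d / (n1 * n2)) * (n1 * n2))%R by field; lra.
    set z := (d / (n1 * n2))%R in h E1. have hz : (z * (16 * C) < 1)%R.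
    { have -> : 1%R = (/ (16 * C) * (16 * C))%R by field; lra.
      apply Rmult_lt_compat_r; lra. }
    rewrite E1. nra. }
  have hE : (INR #|E| + INR #|~: E| = n1 * n2)%R.
  { rewrite -INR_addn cardsC card_prod INR_muln. by []. }
  rewrite /edge_density -/n1 -/n2. split.
  - destruct (Rle_or_lt (/ (16 * C)) (INR #|E| / (n1 * n2))) as [ok|bad]; first exact ok.
    exfalso. have hb := key _ (pos_INR _) bad.
    have [T1 [T2 [c1 [c2 hT]]]] := @side C V1 V2 (fun x y => (x, y) \in E) HC h1 h2
      ltac:(have -> : #|[set p : V1 * V2 | (p.1, p.2) \in E]| = #|E|;
              [by apply: eq_card => -[x y]; rewrite inE | exact: hb]).
    apply: (HR _ _ ht1 ht2). exists T1, T2. split => //. split => //. right.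
    move=> x y hx hy. exact: hT.
  - destruct (Rle_or_lt (INR #|E| / (n1 * n2)) (1 - / (16 * C))) as [ok|bad]; first exact ok.
    exfalso.
    have bad' : (INR #|~: E| / (n1 * n2) < / (16 * C))%R.
    { have -> : (INR #|~: E| / (n1 * n2) = 1 - INR #|E| / (n1 * n2))%R.
      { rewrite -hE. field. lra. }
      lra. }
    have hb := key _ (pos_INR _) bad'.
    have [T1 [T2 [c1 [c2 hT]]]] := @side C V1 V2 (fun x y => (x, y) \notin E) HC h1 h2
      ltac:(have -> : #|[set p : V1 * V2 | (p.1, p.2) \notin E]| = #|~: E|;
              [by apply: eq_card => -[x y]; rewrite !inE | exact: hb]).
    apply: (HR _ _ ht1 ht2). exists T1, T2. split => //. split => //. left.
    move=> x y hx hy. have := hT x y hx hy. by rewrite negbK.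
Qed.
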